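(* Let $\mathcal{H}$ be a finite family of digraphs, $D$ a digraph and $k$ an integer. A set $X\subseteq V(D)$ is a solution to the instance $(D,k)$ of $\mathcal{H}$-SCC Deletion if and only if it is a solution to the instance $(D,k)$ of the $GPC(\mathcal{H})$-Hitting problem.
   Context: Subgraphs are not necessarily induced; strong components are maximal sets of mutually reachable vertices. A solution to $(D,k)$ of $\mathcal{H}$-SCC Deletion is a set $X\subseteq V(D)$ with $|X|\le k$ such that no strong component of $D-X$ contains a subgraph isomorphic to a graph in $\mathcal{H}$. For a (possibly infinite) family $\mathcal{F}$, a solution to $(D,k)$ of $\mathcal{F}$-Hitting is a set $X\subseteq V(D)$ with $|X|\le k$ such that $D-X$ contains no subgraph isomorphic to a graph in $\mathcal{F}$. For a digraph $H$, $PC(H)$ is the set of strongly connected digraphs of the form $H\cup P_1\cup\dots\cup P_\ell$ (union of vertex and arc sets), where each $P_i$ is a directed path with both end-points in $V(H)$; $GPC(H)$ is the subset of those admitting such a representation with pairwise distinct ordered end-point pairs of the $P_i$. $GPC(\mathcal{H})=\bigcup_{H\in\mathcal{H}}GPC(H)$. *)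

(* Defs.v *)
From Stdlib Require List.
From mathcomp Require Import all_boot.
Set Implicit Arguments. Unset Strict Implicit. Unset Printing Implicit Defensive.

(* A (finite) digraph: a finite vertex type and an arc relation
   (no parallel arcs; loops are allowed by the type but play no special role). *)
Record digraph : Type := Digraph { dv : finType; darc : rel dv }.

(* G has a (not necessarily induced) subgraph isomorphic to H, all of whose
   vertices lie in the vertex set S of G: an injective arc-preserving map. *)
Definition embeds_in (H G : digraph) (S : {pred dv G}) : Prop :=
  exists f : dv H -> dv G,
    [/\ injective f, (forall u, f u \in S) &
        (forall u v, darc u v -> darc (f u) (f v))].

Definition del_arc (D : digraph) (X : {set dv D}) : rel (dv D) :=
  fun u v => [&& darc u v, u \notin X & v \notin X].

Definition strong_component (D : digraph) (X : {set dv D}) (C : {set dv D}) : Prop :=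
  exists2 x, x \notin X &
    C = [set y | [&& y \notin X, connect (del_arc X) x y & connect (del_arc X) y x]].

Definition strongly_connected (G : digraph) : Prop :=
  0 < #|dv G| /\ forall u v : dv G, connect (@darc G) u v.

Definition scc_solution (Hs : seq digraph) (D : digraph) (k : nat) (X : {set dv D}) : Prop :=
  #|X| <= k /\
  forall C, strong_component X C ->
    forall H, List.In H Hs -> ~ embeds_in H (mem C).

(* Solution of F-Hitting (F possibly infinite, given as a predicate on digraphs). *)
Definition hitting_solution (F : digraph -> Prop) (D : digraph) (k : nat) (X : {set dv D}) : Prop :=
  #|X| <= k /\
  forall G, F G -> ~ embeds_in G (mem (~: X)).

Definition seq_arc (T : eqType) (p : seq T) (u v : T) : Prop :=
  exists s1 s2, p = s1 ++ u :: v :: s2.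

(* G is isomorphic to H ∪ P_1 ∪ ... ∪ P_l (union of vertex and arc sets),
   where H is embedded by the injective map h, each P_i is a directed path
   given by its vertex sequence x :: q (duplicate-free) with both end-points
   x and last x q in V(H), the ordered end-point pairs are pairwise distinct,
   and G is strongly connected: G ∈ GPC(H) (up to isomorphism). *)
Definition in_GPC (H G : digraph) : Prop :=
  strongly_connected G /\
  exists (h : dv H -> dv G) (ps : seq (dv G * seq (dv G))),
    [/\ injective h,
        (forall p, p \in ps -> [/\ uniq (p.1 :: p.2), p.1 \in codom h &
                                   last p.1 p.2 \in codom h]),
        uniq [seq (p.1, last p.1 p.2) | p <- ps],
        (forall x : dv G, x \in codom h \/ exists2 p, p \in ps & x \in p.1 :: p.2) &
        (forall u v : dv G, darc u v <->
           ((exists a b, [/\ h a = u, h b = v & darc a b]) \/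
            exists2 p, p \in ps & seq_arc (p.1 :: p.2) u v))].

Definition GPC (Hs : seq digraph) (G : digraph) : Prop :=
  exists H, List.In H Hs /\ in_GPC H G.

(* Main.v *)
Require Import Defs.
From mathcomp Require Import all_boot.
Set Implicit Arguments. Unset Strict Implicit. Unset Printing Implicit Defensive.

Lemma seq_arc_zip (T : eqType) (s : seq T) u v :
  seq_arc s u v <-> (u, v) \in zip s (behead s).
Proof.
split.
  case=> s1 [s2 ->]; elim: s1 => [|x s1 IH] /=; first by rewrite inE eqxx.
  case: s1 IH => [|y s1] /= IH; rewrite inE IH orbT //.
elim: s => [|x t IH] //=.
case: t IH => [|y t] IH //=; rewrite inE => /orP [/eqP [-> ->]|/IH [s1 [s2 E]]].
  by exists [::], t.
by exists (x :: s1), s2; rewrite E.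
Qed.

Lemma zip_map2 (A B : Type) (g : A -> B) (s t : seq A) :
  zip (map g s) (map g t) = map (fun p => (g p.1, g p.2)) (zip s t).
Proof. by elim: s t => [|x s IH] [|y t] //=; rewrite IH. Qed.

Lemma path_zip (T : eqType) (e : rel T) x s :
  path e x s <-> (forall u v, (u, v) \in zip (x :: s) s -> e u v).
Proof.
elim: s x => [|y s IH] x /=; first by split.
split.
  by case/andP=> exy /IH H u v; rewrite inE => /orP [/eqP [-> ->]|/H].
move=> H; rewrite H ?inE ?eqxx //.
by apply/IH=> u v Hi; apply: H; rewrite inE Hi orbT.
Qed.

Lemma path_notin (D : digraph) (X : {set dv D}) x p y :
  path (del_arc X) x p -> y \in p -> y \notin X.
Proof.
elim: p x => [|z p IH] x //= /andP [/and3P [_ _ zX] pp].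
by rewrite inE => /orP [/eqP ->|/(IH _ pp)].
Qed.

Lemma path_mem_connect (T : finType) (e : rel T) x p u :
  path e x p -> u \in x :: p -> connect e x u /\ connect e u (last x p).
Proof.
move=> pp up; split; first exact: (path_connect pp).
case/splitPl: up pp => p1 p2 Hl; rewrite cat_path last_cat -Hl => /andP [_ p2p].
by apply/connectP; exists p2.
Qed.

Lemma connect_map (T1 T2 : finType) (e1 : rel T1) (e2 : rel T2) (g : T1 -> T2) :
  (forall u v, e1 u v -> e2 (g u) (g v)) ->
  forall u v, connect e1 u v -> connect e2 (g u) (g v).
Proof.
move=> He u v /connectP [p pp ->]; elim: p u pp => [|w p IH] u /=.
  by rewrite connect0.
case/andP=> euw pw; apply: connect_trans (IH _ pw).
by apply: connect1; apply: He.
Qed.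

Lemma forward (Hs : seq digraph) (D : digraph) (k : nat) (X : {set dv D}) :
  scc_solution Hs k X -> hitting_solution (GPC Hs) k X.
Proof.
case=> Hk Hscc; split=> // G [H [HH [[G0 Gsc] [h [ps [hinj _ _ _ harc]]]]]] [g [ginj gX garc]].
have gX' : forall u, g u \notin X by move=> u; have := gX u; rewrite in_setC.
have gc : forall u v, connect (del_arc X) (g u) (g v).
  move=> u v; apply: (connect_map (e1 := @darc G)) => // a b ab.
  by rewrite /del_arc garc ?gX'.
case/card_gt0P: G0 => v0 _.
apply: (Hscc _ _ H HH); first by exists (g v0); [apply: gX' | reflexivity].
exists (fun a => g (h a)); split.
- by move=> a b /ginj /hinj.
- move=> a; suff : g (h a) \in [set y | y \notin X & connect (del_arc X) (g v0) y && connect (del_arc X) y (g v0)] by [].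
  by rewrite inE gX' !gc.
- move=> a b ab; apply: garc; apply/harc; left; by exists a, b.
Qed.


Definition Sset (D H : digraph) (f : dv H -> dv D) (P : dv H -> dv H -> seq (dv D)) : {set dv D} :=
  [set y | (y \in codom f) || [exists ab : dv H * dv H, y \in P ab.1 ab.2]].

Definition GV (D H : digraph) (f : dv H -> dv D) (P : dv H -> dv H -> seq (dv D)) : finType :=
  {y : dv D | y \in Sset f P}.

Definition Garc (D H : digraph) (f : dv H -> dv D) (P : dv H -> dv H -> seq (dv D)) : rel (GV f P) :=
  fun u v => [exists a, exists b, [&& f a == val u, f b == val v & darc a b]] ||
             [exists ab : dv H * dv H, (val u, val v) \in zip (f ab.1 :: P ab.1 ab.2) (P ab.1 ab.2)].

Definition Gr (D H : digraph) (f : dv H -> dv D) (P : dv H -> dv H -> seq (dv D)) : digraph :=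
  @Digraph (GV f P) (@Garc _ _ f P).

Lemma Sset_f (D H : digraph) (f : dv H -> dv D) (P : dv H -> dv H -> seq (dv D)) a :
  f a \in Sset f P.
Proof. by rewrite inE codom_f. Qed.

Definition hG (D H : digraph) (f : dv H -> dv D) (P : dv H -> dv H -> seq (dv D)) (a : dv H) : GV f P :=
  exist _ (f a) (@Sset_f _ _ f P a).

Definition lift (D H : digraph) (f : dv H -> dv D) (P : dv H -> dv H -> seq (dv D)) (s : seq (dv D)) : seq (GV f P) :=
  pmap insub s.

Lemma lift_val (D H : digraph) (f : dv H -> dv D) (P : dv H -> dv H -> seq (dv D)) a b :
  map val (lift f P (P a b)) = P a b.
Proof.
rewrite /lift (pmap_filter (@insubK _ _ _)); apply/all_filterP/allP => y yP.
by rewrite insubT // inE; apply/orP; right; apply/existsP; exists (a, b).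
Qed.

Lemma zip_lift (D H : digraph) (f : dv H -> dv D) (P : dv H -> dv H -> seq (dv D)) a b (u v : GV f P) :
  ((u, v) \in zip (hG f P a :: lift f P (P a b)) (lift f P (P a b))) =
  ((val u, val v) \in zip (f a :: P a b) (P a b)).
Proof.
have gen : forall (x : GV f P) s, ((u, v) \in zip (x :: s) s) =
    ((val u, val v) \in zip (map val (x :: s)) (map val s)).
  move=> x s; rewrite zip_map2.
  apply/idP/mapP => [uv|[[x1 x2] xx [/val_inj -> /val_inj ->]] //].
  by exists (u, v).
by rewrite gen /= lift_val.
Qed.

Lemma backward_G (D H : digraph) (X : {set dv D}) (f : dv H -> dv D)
  (P : dv H -> dv H -> seq (dv D))
  (Hf : injective f) (Harc : forall a b, darc a b -> darc (f a) (f b))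
  (HfX : forall a, f a \notin X)
  (HP : forall a b, [/\ uniq (f a :: P a b), path (del_arc X) (f a) (P a b) & last (f a) (P a b) = f b])
  (H0 : 0 < #|dv H|) :
  in_GPC H (Gr f P) /\ embeds_in (Gr f P) (mem (~: X)).
Proof.
have hinj : injective (hG f P) by move=> a b /(congr1 val) /Hf.
have Gpath : forall a b, path (@Garc _ _ f P) (hG f P a) (lift f P (P a b)).
  move=> a b; apply/path_zip => u v uv; apply/orP; right; apply/existsP; exists (a, b).
  by rewrite /= -zip_lift.
have Glast : forall a b, last (hG f P a) (lift f P (P a b)) = hG f P b.
  move=> a b; apply: val_inj; rewrite /= -last_map lift_val.
  by case: (HP a b).
have Gcon : forall a b, connect (@Garc _ _ f P) (hG f P a) (hG f P b).
  by move=> a b; apply/connectP; exists (lift f P (P a b)); rewrite ?Glast.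
have Gcover : forall u : GV f P, (exists a, u = hG f P a) \/
    exists a b, u \in lift f P (P a b).
  move=> u; have := valP u; rewrite inE => /orP [/codomP [a ua]|/existsP [[a b] /= yP]].
    by left; exists a; apply: val_inj.
  by right; exists a, b; rewrite /lift mem_pmap_sub.
split; last first.
  exists val; split; first exact: val_inj.
  - move=> [y yS]; suff : y \in ~: X by [].
    rewrite in_setC; move: yS; rewrite inE => /orP [/codomP [a ->]|/existsP [[a b] /= yP]].
      exact: HfX.
    by case: (HP a b) => _ pp _; apply: path_notin pp yP.
  - move=> u v /orP [/existsP [a /existsP [b /and3P [/eqP <- /eqP <- ab]]]|].
      exact: Harc.
    case/existsP => [[a b]] /= uv; case: (HP a b) => _ pp _.
    by have /and3P [] := proj1 (path_zip _ _ _) pp _ _ uv.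
split.
  split.
    case/card_gt0P: H0 => a _; apply/card_gt0P; by exists (hG f P a).
  have Hto : forall u : GV f P, exists a, connect (@Garc _ _ f P) u (hG f P a).
    move=> u; case: (Gcover u) => [[a ->]|[a [b ub]]]; first by exists a.
    exists b; rewrite -(Glast a b).
    by case: (path_mem_connect (Gpath a b) (_ : u \in _ :: _)) => //; rewrite inE ub orbT.
  have Hfrom : forall u : GV f P, exists a, connect (@Garc _ _ f P) (hG f P a) u.
    move=> u; case: (Gcover u) => [[a ->]|[a [b ub]]]; first by exists a.
    exists a.
    by case: (path_mem_connect (Gpath a b) (_ : u \in _ :: _)) => //; rewrite inE ub orbT.
  move=> u v; case: (Hto u) => a ua; case: (Hfrom v) => b bv.
  exact: connect_trans ua (connect_trans (Gcon a b) bv).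
exists (hG f P), [seq (hG f P ab.1, lift f P (P ab.1 ab.2)) | ab <- enum {: dv H * dv H}].
split => //.
- move=> p /mapP [[a b] _ ->] /=; split; last by rewrite Glast codom_f.
  + have : uniq (map val (hG f P a :: lift f P (P a b))) by rewrite map_cons lift_val; case: (HP a b).
    by rewrite (map_inj_uniq val_inj).
  + exact: codom_f.
- rewrite -map_comp; rewrite (map_inj_uniq (f := fun ab : dv H * dv H => _)) ?enum_uniq //.
  case=> [a1 a2] [b1 b2] /=; rewrite !Glast => -[E1 E2]; by rewrite (Hf _ _ E1) (Hf _ _ E2).
- move=> x; case: (Gcover x) => [[a ->]|[a [b xb]]]; first by left; apply: codom_f.
  right; exists (hG f P a, lift f P (P a b)); last by rewrite inE xb orbT.
  by apply/mapP; exists (a, b); rewrite ?mem_enum.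
- move=> u v; split.
    case/orP => [/existsP [a /existsP [b /and3P [/eqP ua /eqP vb ab]]]|].
      by left; exists a, b; split => //; apply: val_inj.
    case/existsP => [[a b]] /= uv; right.
    exists (hG f P a, lift f P (P a b)); first by apply/mapP; exists (a, b); rewrite ?mem_enum.
    by apply/seq_arc_zip; rewrite /= zip_lift.
  case=> [[a [b [<- <- ab]]]|[p /mapP [[a b] _ ->] /= /seq_arc_zip uv]].
    by apply/orP; left; apply/existsP; exists a; apply/existsP; exists b; rewrite !eqxx ab.
  by apply/orP; right; apply/existsP; exists (a, b); rewrite /= -zip_lift.
Qed.

Theorem lemma20 (Hs : seq digraph)
    (Hs_nonempty : forall H, List.In H Hs -> 0 < #|dv H|)
    (D : digraph) (k : nat) (X : {set dv D}) :
  scc_solution Hs k X <-> hitting_solution (GPC Hs) k X.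
Proof.
split; first exact: forward.
case=> Hk Hhit; split=> // C [x xX ->] H HH [f [finj fC farc]].
have fC' : forall a, [&& f a \notin X, connect (del_arc X) x (f a) & connect (del_arc X) (f a) x].
  move=> a; have : f a \in [set y | [&& y \notin X, connect (del_arc X) x y & connect (del_arc X) y x]] := fC a.
  by rewrite inE.
have Hex : forall a b, exists p, [&& uniq (f a :: p), path (del_arc X) (f a) p & last (f a) p == f b].
  move=> a b.
  have : connect (del_arc X) (f a) (f b).
    case/and3P: (fC' a) => _ _ ax; case/and3P: (fC' b) => _ xb _.
    exact: connect_trans ax xb.
  case/connectP => p pp ->; case: (shortenP pp) => p' pp' up' _.
  by exists p'; rewrite up' pp' eqxx.
pose P a b := xchoose (Hex a b).
have HP : forall a b, [/\ uniq (f a :: P a b), path (del_arc X) (f a) (P a b) & last (f a) (P a b) = f b].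
  move=> a b; case/and3P: (xchooseP (Hex a b)) => u p /eqP l; by split.
have HfX : forall a, f a \notin X by move=> a; case/and3P: (fC' a).
case: (backward_G finj farc HfX HP (Hs_nonempty H HH)) => Hg He.
by apply: (Hhit (Gr f P)) => //; exists H.
Qed.
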